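(* Let $m\geq\beta\geq 1$ be integers and let $G^*$ be a graph with maximum $q$ among all graphs in $\mathfrak{G}_{m,\geq\beta}$. Let $X^*$ be a principal eigenvector of $Q(G^* )$ with coordinates $x^*_v$, let $M^*(G^* )$ be a matching of $G^*$ extremal to $X^*$, and let $u_1v_1,u_2v_2,\ldots,u_kv_k$ ($k=\beta(G^* )$) be an ordering of $M^*(G^* )$ proper to $X^*$. Suppose $\beta(G^* )\geq 2$ and let $i,j\in\{1,\ldots,k\}$ with $i<j$. Then $x^*_{u_i}\geq x^*_{v_j}$ if and only if the subgraph of $G^*$ induced by $\{u_i,v_i,u_j,v_j\}$ is either two disjoint edges ($2K_2$) or a complete graph $K_4$.
   Context: All graphs are finite, simple and undirected (isolated vertices allowed). $Q(G)=D(G)+A(G)$ is the signless Laplacian matrix and $q(G)$ its largest eigenvalue; a principal eigenvector of $Q(G)$ is a nonnegative unit vector $X$ with $Q(G)X=q(G)X$. $\beta(G)$ is the matching number. $\mathfrak{G}_{m,\geq\beta}$ is the set of graphs with exactly $m$ edges and matching number at least $\beta$. For a graph $G$ with at least one edge and a principal eigenvector $X$ (coordinates $x_v$), a matching $M^*(G)$ is extremal to $X$ if it is a maximum matching and $\sum_{uv\in M^*(G)}(x_u+x_v)^2=\max_M\sum_{uv\in M}(x_u+x_v)^2$ over all maximum matchings $M$. An ordering $u_1v_1,\ldots,u_kv_k$ of the edges of $M^*(G^* )$ (with a designated labelling of the endpoints of each edge) is proper to $X^*$ if for each $i$: (i) $x^*_{v_i}\geq x^*_{u_i}$; (ii) $x^*_{v_i}\geq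 x^*_{v_{i+1}}$ (for $i<k$); (iii) $x^*_{u_i}\geq x^*_{u_{i+1}}$ whenever $x^*_{v_i}=x^*_{v_{i+1}}$ (for $i<k$). *)

(* Defs.v *)
From HB Require Import structures.
From mathcomp Require Import all_boot all_order all_algebra.
From mathcomp Require Import reals.
Set Implicit Arguments. Unset Strict Implicit. Unset Printing Implicit Defensive.
Import Order.TTheory GRing.Theory Num.Theory.
Local Open Scope ring_scope.

Definition simple_graph (T : finType) (e : rel T) : Prop :=
  symmetric e /\ irreflexive e.

Definition edges (T : finType) (e : rel T) : {set {set T}} :=
  [set E : {set T} | [exists x : T, exists y : T, e x y && (E == [set x; y])]].

Definition degree (T : finType) (e : rel T) (x : T) : nat := #|[set y | e x y]|.

Definition matching (T : finType) (e : rel T) (M : {set {set T}}) : bool :=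
  (M \subset edges e) && trivIset M.

Definition matching_number (T : finType) (e : rel T) : nat :=
  \max_(M : {set {set T}} | matching e M) #|M|.

Definition max_matching (T : finType) (e : rel T) (M : {set {set T}}) : bool :=
  matching e M && (#|M| == matching_number e).

Definition sQ (R : realType) (n : nat) (e : rel 'I_n) : 'M[R]_n :=
  diag_mx (\row_i (degree e i)%:R) + \matrix_(i, j) (e i j)%:R.

Definition is_q (R : realType) (n : nat) (e : rel 'I_n) (lam : R) : Prop :=
  eigenvalue (sQ R e) lam /\ forall mu, eigenvalue (sQ R e) mu -> mu <= lam.

Definition principal_eigvec (R : realType) (n : nat) (e : rel 'I_n)
    (q : R) (X : 'cV[R]_n) : Prop :=
  [/\ forall i, 0 <= X i 0, \sum_i X i 0 ^+ 2 = 1 & sQ R e *m X = q *: X].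

Definition mweight (R : realType) (n : nat) (X : 'cV[R]_n)
    (M : {set {set 'I_n}}) : R :=
  \sum_(E in M) (\sum_(w in E) X w 0) ^+ 2.

Definition extremal_matching (R : realType) (n : nat) (e : rel 'I_n)
    (X : 'cV[R]_n) (M : {set {set 'I_n}}) : Prop :=
  max_matching e M /\
  forall M', max_matching e M' -> mweight X M' <= mweight X M.

Definition proper_ordering (R : realType) (n k : nat) (X : 'cV[R]_n)
    (M : {set {set 'I_n}}) (u v : 'I_k -> 'I_n) : Prop :=
  [/\ M = [set [set u i; v i] | i : 'I_k],
      forall i, X (u i) 0 <= X (v i) 0 &
      forall i j : 'I_k, val j = (val i).+1 ->
        X (v j) 0 <= X (v i) 0 /\
        (X (v i) 0 = X (v j) 0 -> X (u j) 0 <= X (u i) 0)].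

Definition induced_edges (T : finType) (e : rel T) (S : {set T}) :
  {set {set T}} := [set E in edges e | E \subset S].

Definition is_2K2 (T : finType) (e : rel T) (S : {set T}) : bool :=
  [&& #|S| == 4, #|induced_edges e S| == 2 & trivIset (induced_edges e S)].

Definition is_K4 (T : finType) (e : rel T) (S : {set T}) : bool :=
  (#|S| == 4) && (#|induced_edges e S| == 6).

(* Main.v *)
Require Import Defs.
From HB Require Import structures.
From mathcomp Require Import all_boot all_order all_algebra.
From mathcomp Require Import reals.
Import Order.TTheory GRing.Theory Num.Theory.
Local Open Scope ring_scope.

From mathcomp Require Import perm.
From mathcomp Require classical_sets.
From mathcomp Require Import ring lra.
Set Implicit Arguments. Unset Strict Implicit. Unset Printing Implicit Defensive.

Lemma disc_le (R : realFieldType) (p r w : R) : 0 <= w ->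
  (forall t, 0 <= p + 2 * t * r + t ^+ 2 * w) -> r ^+ 2 <= p * w.
Proof.
move=> w0 H.
have [wz|wp] := eqVneq w 0.
  subst w. rewrite mulr0.
  have [rz|rn] := eqVneq r 0; first by rewrite rz expr0n.
  have := H (- (p + 1) / (2 * r)).
  have -> : p + 2 * (- (p + 1) / (2 * r)) * r + (- (p + 1) / (2 * r)) ^+ 2 * 0 = -1.
    by field; rewrite rn.
  by move=> h; exfalso; move: h; rewrite ler0N1.
have wpos : 0 < w by rewrite lt_def wp w0.
have := H (- r / w).
have -> : p + 2 * (- r / w) * r + (- r / w) ^+ 2 * w = (p * w - r ^+ 2) / w.
  by field.
rewrite pmulr_lge0 ?invr_gt0 // subr_ge0 //.
Qed.


Section Dot.
Variable R : realFieldType.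
Variable n : nat.
Implicit Types Y Z W : 'cV[R]_n.
Implicit Types A B : 'M[R]_n.

Definition dot Y Z : R := \sum_i Y i 0 * Z i 0.

Lemma dotC Y Z : dot Y Z = dot Z Y.
Proof. by apply: eq_bigr => i _; rewrite mulrC. Qed.

Lemma dotDl Y1 Y2 Z : dot (Y1 + Y2) Z = dot Y1 Z + dot Y2 Z.
Proof. by rewrite /dot -big_split; apply: eq_bigr => i _; rewrite mxE mulrDl. Qed.

Lemma dotZl a Y Z : dot (a *: Y) Z = a * dot Y Z.
Proof. by rewrite /dot mulr_sumr; apply: eq_bigr => i _; rewrite mxE mulrA. Qed.

Lemma dotDr Y Z1 Z2 : dot Y (Z1 + Z2) = dot Y Z1 + dot Y Z2.
Proof. by rewrite dotC dotDl !(dotC _ Y). Qed.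

Lemma dotZr a Y Z : dot Y (a *: Z) = a * dot Y Z.
Proof. by rewrite dotC dotZl dotC. Qed.

Lemma dot0r Y : dot Y 0 = 0.
Proof. by rewrite /dot big1 // => i _; rewrite mxE mulr0. Qed.

Lemma dot_ge0 Y : 0 <= dot Y Y.
Proof. by rewrite /dot sumr_ge0 // => i _; rewrite -expr2 sqr_ge0. Qed.

Lemma dot_eq0 Y : dot Y Y = 0 -> Y = 0.
Proof.
move=> /eqP; rewrite /dot psumr_eq0 => [/allP H|i _]; last by rewrite -expr2 sqr_ge0.
apply/matrixP => i j; rewrite (ord1 j) mxE.
have := H i (mem_index_enum i); rewrite /= mulf_eq0 orbb => /eqP //.
Qed.

Lemma dot_sym A Y Z : A^T = A -> dot Y (A *m Z) = dot (A *m Y) Z.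
Proof.
move=> sA; rewrite /dot.
under eq_bigr => i _ do rewrite mxE mulr_sumr.
rewrite exchange_big /=; apply: eq_bigr => j _.
rewrite mxE mulr_suml; apply: eq_bigr => i _.
have -> : A i j = A j i by rewrite -{1}sA mxE.
by rewrite mulrCA mulrA [_ * Y i 0]mulrC.
Qed.

Definition psd A := forall W, 0 <= dot W (A *m W).

Lemma cs_form A Y Z : A^T = A -> psd A ->
  dot Y (A *m Z) ^+ 2 <= dot Y (A *m Y) * dot Z (A *m Z).
Proof.
move=> sA pA; apply: disc_le; first exact: pA.
move=> t; have := pA (Y + t *: Z).
rewrite mulmxDr -scalemxAr !dotDl !dotDr !dotZl !dotZr.
rewrite (dot_sym Z Y sA) (dotC (A *m Z)).
suff -> : dot Y (A *m Y) + 2 * t * dot Y (A *m Z) + t ^+ 2 * dot Z (A *m Z) =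
  dot Y (A *m Y) + t * dot Y (A *m Z) + (t * dot Y (A *m Z) + t * (t * dot Z (A *m Z))) by [].
ring.
Qed.

End Dot.


Section Spec.
Variable R : realType.
Variable n : nat.
Implicit Types Y Z W : 'cV[R]_n.
Implicit Types A B : 'M[R]_n.

Lemma dot1 Y Z : dot Y (1%:M *m Z) = dot Y Z.
Proof. by rewrite mul1mx. Qed.

Lemma psd1 : psd (1%:M : 'M[R]_n).
Proof. by move=> W; rewrite dot1 dot_ge0. Qed.

Lemma cs_dot Y Z : dot Y Z ^+ 2 <= dot Y Y * dot Z Z.
Proof. by have := cs_form Y Z (trmx1 R n) psd1; rewrite !dot1. Qed.

Lemma coord_le1 Y i : dot Y Y = 1 -> `|Y i 0| <= 1.
Proof.
move=> h; have : Y i 0 ^+ 2 <= 1.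
  rewrite -h /dot (bigD1 i) //= expr2 lerDl sumr_ge0 // => j _.
  by rewrite -expr2 sqr_ge0.
move=> H; rewrite -(expr_le1 (n:=2)) //= ?normr_ge0 // real_normK //.
exact: num_real.
Qed.

Lemma mx_bound (C : 'M[R]_n) W :
  dot (C *m W) (C *m W) <= (\sum_i \sum_j C i j ^+ 2) * dot W W.
Proof.
rewrite {1}/dot mulr_suml; apply: ler_sum => i _.
pose U : 'cV[R]_n := \col_j C i j.
have -> : (C *m W) i 0 = dot U W by rewrite mxE; apply: eq_bigr => j _; rewrite mxE.
have -> : \sum_j C i j ^+ 2 = dot U U by apply: eq_bigr => j _; rewrite mxE expr2.
by rewrite -expr2 cs_dot.
Qed.


Lemma dot_delta (i0 : 'I_n) : dot (delta_mx i0 0) (delta_mx i0 0) = 1 :> R.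
Proof.
rewrite /dot (bigD1 i0) //= big1 => [|j ji]; rewrite !mxE ?eqxx /=.
  by rewrite mulr1 addr0.
by rewrite (negbTE ji) mul0r.
Qed.

Lemma aux_contra (u e d2 : R) : d2 <= u * e -> e * (2 * (u + 1)) = d2 ->
  0 < e -> 0 <= u -> False.
Proof. move=> *; nra. Qed.

Lemma psd_unit_sup A : A^T = A -> psd A -> (0 < n)%N ->
  exists s, [/\ eigenvalue A s, (forall mu, eigenvalue A mu -> mu <= s),
     (forall Y, dot Y (A *m Y) <= s * dot Y Y) &
     (forall Y, dot Y (A *m Y) = s * dot Y Y -> A *m Y = s *: Y)].
Proof.
move=> sA pA n0.
pose S : classical_sets.set R := fun r => exists Y, dot Y Y = 1 /\ r = dot Y (A *m Y).
pose i0 : 'I_n := Ordinal n0.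
pose K := \sum_i \sum_j `|A i j|.
have hS : classical_sets.has_sup S.
  split.
    by exists (dot (delta_mx i0 0) (A *m delta_mx i0 0)); exists (delta_mx i0 0); rewrite dot_delta.
  exists K => r [Y [hY ->]].
  rewrite /dot /K; apply: ler_sum => i _; rewrite mxE mulr_sumr; apply: ler_sum => j _.
  rewrite (le_trans (ler_norm _)) // !normrM mulrC -mulrA.
  rewrite ler_piMr ?normr_ge0 //.
  by rewrite -[1]mulr1 ler_pM ?normr_ge0 ?coord_le1.
set s := sup S.
have sup1 Y : dot Y Y = 1 -> dot Y (A *m Y) <= s.
  by move=> h; apply: sup_upper_bound => //; exists Y.
have s0 : 0 <= s.
  by apply: le_trans (sup1 (delta_mx i0 0) (dot_delta i0)); exact: pA.
have hom Y : dot Y (A *m Y) <= s * dot Y Y.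
  have [c0|cn] := eqVneq (dot Y Y) 0.
    by rewrite (dot_eq0 c0) mulmx0 !dot0r mulr0.
  have cp : 0 < dot Y Y by rewrite lt_def cn dot_ge0.
  pose r := Num.sqrt (dot Y Y).
  have rp : 0 < r by rewrite sqrtr_gt0.
  have := sup1 (r^-1 *: Y).
  rewrite -scalemxAr !dotZl !dotZr.
  have rr : r * r = dot Y Y by rewrite -expr2 sqr_sqrtr // ltW.
  have -> : r^-1 * (r^-1 * dot Y Y) = 1.
    by rewrite -rr; field; rewrite gt_eqF.
  move=> /(_ erefl) h.
  have : dot Y (A *m Y) = (r * r) * (r^-1 * (r^-1 * dot Y (A *m Y))).
    by field; rewrite gt_eqF.
  move=> ->; rewrite rr [s * _]mulrC ler_pM2l //.
pose B := s%:M - A.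
have BY Y : B *m Y = s *: Y - A *m Y by rewrite mulmxBl mul_scalar_mx.
have dB Y : dot Y (B *m Y) = s * dot Y Y - dot Y (A *m Y).
  by rewrite BY dotDr dotZr -scaleN1r dotZr mulN1r.
have sB : B^T = B by rewrite /B linearB /= sA tr_scalar_mx.
have pB : psd B by move=> W; rewrite dB subr_ge0.
have key Y : dot (B *m Y) (B *m Y) <= s * dot Y (B *m Y).
  have := cs_form Y (B *m Y) sB pB.
  rewrite (dot_sym Y (B *m Y) sB).
  have h2 : dot (B *m Y) (B *m (B *m Y)) <= s * dot (B *m Y) (B *m Y).
    by rewrite dB lerBlDr lerDl pA.
  have := dot_ge0 (B *m Y); have := pB Y.
  set D := dot (B *m Y) (B *m Y); set P := dot Y (B *m Y).
  set T := dot (B *m Y) (B *m (B *m Y)) in h2 *.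
  move=> P0 D0 h1.
  have [Dz|Dn] := eqVneq D 0; first by rewrite Dz mulr_ge0.
  have Dp : 0 < D by rewrite lt_def Dn D0.
  have h3 : D ^+ 2 <= P * (s * D) := le_trans h1 (ler_wpM2l P0 h2).
  nra.
have eig : eigenvalue A s.
  apply/eigenvalueP.
  have /det0P [v vn vB] : \det B == 0.
    apply/negPn/negP => dn.
    pose d := \det B; pose C := \adj B; pose K2 := \sum_i \sum_j C i j ^+ 2.
    have K20 : 0 <= K2 by apply: sumr_ge0 => i _; apply: sumr_ge0 => j _; exact: sqr_ge0.
    have bnd Y : dot Y Y = 1 -> d ^+ 2 <= K2 * (s * dot Y (B *m Y)).
      move=> h; have e : C *m (B *m Y) = d *: Y by rewrite mulmxA mul_adj_mx mul_scalar_mx.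
      have := mx_bound C (B *m Y); rewrite e dotZl dotZr h mulr1 mulrA -expr2 => h'.
      by apply: le_trans h' _; rewrite -mulrA; apply: ler_wpM2l => //; exact: key.
    have dp : 0 < d ^+ 2 by rewrite lt_def sqr_ge0 andbT sqrf_eq0.
    have u0 : 0 <= K2 * s by rewrite mulr_ge0.
    pose eps := d ^+ 2 / (2 * (K2 * s + 1)).
    have ep : 0 < eps by rewrite divr_gt0 // mulr_gt0 // ltr_wpDl.
    have heps : eps * (2 * (K2 * s + 1)) = d ^+ 2.
      by rewrite /eps mulrVK // unitfE mulf_neq0 // gt_eqF // ltr_wpDl.
    have [r [Y [hY ->]] hr] := sup_adherent ep hS.
    have := bnd Y hY; rewrite dB hY mulr1 => hb.
    have h1 : K2 * (s * (s - dot Y (A *m Y))) <= (K2 * s) * eps.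
      by rewrite mulrA; apply: ler_wpM2l => //; rewrite lerBlDr -lerBlDl ltW.
    have h2 := le_trans hb h1.
    by have := aux_contra h2 heps ep u0.
  exists v => //.
  move/eqP: vB; rewrite /B mulmxBr mul_mx_scalar subr_eq0 => /eqP ->.
  done.
exists s; split => //.
- move=> mu /eigenvalueP [v vA vn].
  have AY : A *m v^T = mu *: v^T.
    by rewrite -{1}sA -trmx_mul vA linearZ.
  have := hom v^T; rewrite AY dotZr.
  have Yp : 0 < dot v^T v^T.
    rewrite lt_def dot_ge0 andbT; apply/negP => /eqP /dot_eq0 /eqP.
    by rewrite trmx_eq0 (negbTE vn).
  by rewrite ler_pM2r.
- move=> Y h.
  have h0 : dot Y (B *m Y) = 0 by rewrite dB h subrr.
  have := key Y; rewrite h0 mulr0 => hk.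
  have : dot (B *m Y) (B *m Y) = 0 by apply/eqP; rewrite eq_le hk dot_ge0.
  move/dot_eq0/eqP; rewrite BY subr_eq0 => /eqP ->.
  done.
Qed.

End Spec.


Section Graph.
Variable R : realType.
Variable n : nat.
Implicit Types e : rel 'I_n.
Implicit Types Y : 'cV[R]_n.

Lemma degree_sum e x : (degree e x)%:R = \sum_j (e x j)%:R :> R.
Proof.
rewrite /degree -sum1_card natr_sum big_mkcond /=.
by apply: eq_bigr => j _; rewrite inE; case: (e x j).
Qed.

Lemma sQ_mul e Y i : (sQ R e *m Y) i 0 = \sum_j (e i j)%:R * (Y i 0 + Y j 0).
Proof.
rewrite mxE.
under eq_bigr => j _ do rewrite !mxE mulrDl.
rewrite big_split /=.
rewrite (bigD1 i) //= eqxx mulr1n big1 ?addr0; last first.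
  by move=> j; rewrite eq_sym => /negbTE ->; rewrite mulr0n mul0r.
rewrite degree_sum mulr_suml -big_split /=.
by apply: eq_bigr => j _; rewrite mulrDr.
Qed.

Lemma sQ_form e Y : dot Y (sQ R e *m Y) = \sum_i \sum_j (e i j)%:R * (Y i 0 * (Y i 0 + Y j 0)).
Proof.
rewrite /dot; apply: eq_bigr => i _; rewrite sQ_mul mulr_sumr.
by apply: eq_bigr => j _; rewrite mulrCA.
Qed.

Lemma sQ_psd e : symmetric e -> psd (sQ R e).
Proof.
move=> se Y; rewrite sQ_form.
have : 2 * (\sum_i \sum_j (e i j)%:R * (Y i 0 * (Y i 0 + Y j 0))) =
       \sum_i \sum_j (e i j)%:R * (Y i 0 + Y j 0) ^+ 2.
  rewrite mulr2n mulrDl mul1r {2}exchange_big /= -big_split /=.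
  apply: eq_bigr => i _; rewrite -big_split /=; apply: eq_bigr => j _.
  by rewrite (se j i); ring.
move=> h; have : 0 <= 2 * (\sum_i \sum_j (e i j)%:R * (Y i 0 * (Y i 0 + Y j 0))).
  rewrite h; apply: sumr_ge0 => i _; apply: sumr_ge0 => j _.
  by rewrite mulr_ge0 ?ler0n ?sqr_ge0.
by rewrite pmulr_rge0.
Qed.

Lemma sQ_sym e : symmetric e -> (sQ R e)^T = sQ R e.
Proof.
move=> se; apply/matrixP => i j; rewrite !mxE.
by rewrite (se j i); case: (eqVneq j i) => [->|ji]; rewrite ?eqxx // eq_sym (negbTE ji) !mulr0n.
Qed.



Lemma graph_spec e : simple_graph e -> (0 < n)%N ->
  exists s, [/\ is_q e s, (forall Y, dot Y (sQ R e *m Y) <= s * dot Y Y) &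
     (forall Y, dot Y (sQ R e *m Y) = s * dot Y Y -> sQ R e *m Y = s *: Y)].
Proof.
move=> [se ie] n0.
have [s [h1 h2 h3 h4]] := psd_unit_sup (sQ_sym se) (sQ_psd se) n0.
by exists s; split.
Qed.

Definition rot e (y t s : 'I_n) : rel 'I_n := fun i j =>
  ((i == y) && (j == s)) || ((i == s) && (j == y)) ||
  (e i j && ~~ ((i == y) && (j == t)) && ~~ ((i == t) && (j == y))).

Section Rot.
Variables (e : rel 'I_n) (y t s : 'I_n).
Hypotheses (se : symmetric e) (ie : irreflexive e) (eyt : e y t) (neys : ~~ e y s) (ys : y != s).

Lemma yt : y != t.
Proof. by apply/eqP => h; move: eyt; rewrite h ie. Qed.
Lemma st : s != t.
Proof. by apply/eqP => h; move: neys; rewrite h eyt. Qed.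

Lemma rot_simple : simple_graph (rot e y t s).
Proof.
split.
  move=> i j; rewrite /rot (se i j).
  by case: (e j i); case: (i == y); case: (j == s); case: (i == s); case: (j == y); case: (i == t); case: (j == t).
move=> i; rewrite /rot ie /= orbF.
by apply/negP => /orP [] /andP [/eqP -> /eqP h]; move: ys; rewrite h eqxx.
Qed.

Lemma rot_ind i j : ((rot e y t s) i j)%:R =
  (e i j)%:R - ((i == y) && (j == t))%:R - ((i == t) && (j == y))%:R
   + ((i == y) && (j == s))%:R + ((i == s) && (j == y))%:R :> R.
Proof.
have Y1 := yt; have Y2 := st; have Y3 := ys.
have Y4 : t != y by rewrite eq_sym.
have Y5 : t != s by rewrite eq_sym.
have Y6 : s != y by rewrite eq_sym.
have eys : e y s = false by apply: negbTE.
have esy : e s y = false by rewrite se.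
have ety : e t y by rewrite se.
rewrite /rot.
have [/andP[/eqP-> /eqP->]|hA] := boolP ((i == y) && (j == t)).
  by rewrite ?eqxx ?eyt ?(negbTE Y1, negbTE Y2, negbTE Y3, negbTE Y4, negbTE Y5, negbTE Y6) /=; ring.
have [/andP[/eqP-> /eqP->]|hB] := boolP ((i == t) && (j == y)).
  by rewrite ?eqxx ?ety ?(negbTE Y1, negbTE Y2, negbTE Y3, negbTE Y4, negbTE Y5, negbTE Y6) /=; ring.
have [/andP[/eqP-> /eqP->]|hC] := boolP ((i == y) && (j == s)).
  by rewrite ?eqxx ?eys ?(negbTE Y1, negbTE Y2, negbTE Y3, negbTE Y4, negbTE Y5, negbTE Y6) /=; ring.
have [/andP[/eqP-> /eqP->]|hD] := boolP ((i == s) && (j == y)).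
  by rewrite ?eqxx ?esy ?(negbTE Y1, negbTE Y2, negbTE Y3, negbTE Y4, negbTE Y5, negbTE Y6) /=; ring.
rewrite ?(negbTE hA) ?(negbTE hB) ?(negbTE hC) ?(negbTE hD) /= ?andbT.
by rewrite !subr0 !addr0.
Qed.


Lemma sum_delta2 (f : 'I_n -> 'I_n -> R) a b :
  \sum_i \sum_j ((i == a) && (j == b))%:R * f i j = f a b.
Proof.
rewrite (bigD1 a) //=.
rewrite [X in _ + X]big1 ?addr0; last first.
  by move=> i ia; apply: big1 => j _; rewrite (negbTE ia) mul0r.
rewrite (bigD1 b) //= !eqxx mul1r [X in _ + X]big1 ?addr0 // => j /negbTE ->.
by rewrite mul0r.
Qed.

Lemma sum_delta1 (f : 'I_n -> R) b : \sum_j (j == b)%:R * f j = f b.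
Proof.
rewrite (bigD1 b) //= eqxx mul1r big1 ?addr0 // => j /negbTE ->.
by rewrite mul0r.
Qed.

Lemma quad_rot Y : dot Y (sQ R (rot e y t s) *m Y) =
  dot Y (sQ R e *m Y) - (Y y 0 + Y t 0) ^+ 2 + (Y y 0 + Y s 0) ^+ 2.
Proof.
rewrite !sQ_form.
set f := fun i j => Y i 0 * (Y i 0 + Y j 0).
have -> : \sum_i \sum_j ((rot e y t s) i j)%:R * (Y i 0 * (Y i 0 + Y j 0)) =
  \sum_i \sum_j (e i j)%:R * f i j - \sum_i \sum_j ((i == y) && (j == t))%:R * f i j
  - \sum_i \sum_j ((i == t) && (j == y))%:R * f i j
  + \sum_i \sum_j ((i == y) && (j == s))%:R * f i j
  + \sum_i \sum_j ((i == s) && (j == y))%:R * f i j.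
  rewrite -!sumrB -!big_split /=; apply: eq_bigr => i _.
  rewrite -!sumrB -!big_split /=; apply: eq_bigr => j _.
  by rewrite rot_ind /f; ring.
rewrite !sum_delta2 /f; ring.
Qed.

Lemma row_rot Y : (sQ R (rot e y t s) *m Y) t 0 = (sQ R e *m Y) t 0 - (Y t 0 + Y y 0).
Proof.
rewrite !sQ_mul.
have Y4 : t != y by rewrite eq_sym yt.
have Y5 : t != s by rewrite eq_sym st.
have -> : \sum_j ((rot e y t s) t j)%:R * (Y t 0 + Y j 0) =
   \sum_j (e t j)%:R * (Y t 0 + Y j 0) - \sum_j (j == y)%:R * (Y t 0 + Y j 0).
  rewrite -sumrB; apply: eq_bigr => j _.
  by rewrite rot_ind (negbTE Y4) (negbTE Y5) eqxx /=; ring.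
by rewrite sum_delta1.
Qed.

End Rot.

End Graph.


Section Sets.
Variable T : finType.

Lemma set2_eq (a b c d : T) :
  ([set a; b] == [set c; d]) = ((a == c) && (b == d)) || ((a == d) && (b == c)).
Proof.
apply/idP/idP.
  move/eqP => h.
  have ha : a \in [set c; d] by rewrite -h set21.
  have hb : b \in [set c; d] by rewrite -h set22.
  have hc : c \in [set a; b] by rewrite h set21.
  have hd : d \in [set a; b] by rewrite h set22.
  move: hc hd; case/set2P: ha => ->; case/set2P: hb => ->;
    move=> /set2P hc /set2P hd; rewrite ?eqxx ?orbT //=;
    case: hc => hc; case: hd => hd; subst; rewrite ?eqxx ?orbT //.
case/orP => /andP [/eqP -> /eqP ->] //.
by rewrite setUC.
Qed.

Lemma edge2 (e : rel T) (a b : T) : symmetric e -> ([set a; b] \in edges e) = e a b.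
Proof.
move=> se; rewrite inE; apply/existsP/idP.
  case=> x /existsP [z /andP [exz]]; rewrite set2_eq.
  by case/orP => /andP [/eqP -> /eqP ->] //; rewrite se.
by move=> eab; exists a; apply/existsP; exists b; rewrite eab eqxx.
Qed.

Lemma edgesP (e : rel T) (E : {set T}) :
  reflect (exists x y, e x y /\ E = [set x; y]) (E \in edges e).
Proof.
rewrite inE; apply: (iffP existsP).
  by case=> x /existsP [z /andP [exz /eqP ->]]; exists x, z.
by case=> x [z [exz ->]]; exists x; apply/existsP; exists z; rewrite exz eqxx.
Qed.

End Sets.

Section EdgesRot.
Variable n : nat.
Variables (e : rel 'I_n) (y t s : 'I_n).
Hypotheses (se : symmetric e) (ie : irreflexive e) (eyt : e y t) (neys : ~~ e y s) (ys : y != s).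

Lemma edges_rot : #|edges (rot e y t s)| = #|edges e|.
Proof.
have eq : edges (rot e y t s) = [set y; s] |: (edges e :\ [set y; t]).
  apply/setP => E; rewrite in_setU1 in_setD1.
  apply/edgesP/idP.
    case=> a [b [rab ->]]; move: rab; rewrite /rot.
    case/orP => [/orP [] /andP [/eqP -> /eqP ->]|].
    - by rewrite eqxx.
    - by rewrite setUC eqxx.
    move=> /andP [/andP [eab nA] nB]; apply/orP; right.
    by rewrite edge2 // eab set2_eq negb_or nA nB.
  case/orP => [/eqP ->|/andP [ne /edgesP [a [b [eab Eab]]]]].
    by exists y, s; rewrite /rot !eqxx.
  exists a, b; split => //; rewrite /rot eab /=.
  by move: ne; rewrite Eab set2_eq negb_or => /andP [-> ->]; rewrite !orbT.
rewrite eq cardsU1 (cardsD1 [set y; t] (edges e)) edge2 // eyt.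
by rewrite in_setD1 edge2 // (negbTE neys) andbF.
Qed.

End EdgesRot.


Section Match.
Variables (n k : nat).
Implicit Types F : 'I_k * bool -> 'I_n.

Definition pairset F : {set {set 'I_n}} := [set [set F (l, false); F (l, true)] | l : 'I_k].

Lemma Fne F l l' b b' : injective F -> l != l' -> F (l, b) != F (l', b').
Proof. by move=> Fi ll'; apply/eqP => /Fi [] /eqP; rewrite (negbTE ll'). Qed.

Lemma pair_inj F : injective F -> injective (fun l => [set F (l, false); F (l, true)]).
Proof.
move=> Fi l l' /eqP; rewrite set2_eq.
by case/orP => /andP [/eqP /Fi [] -> _].
Qed.

Lemma card_pairset F : injective F -> #|pairset F| = k.
Proof. by move=> Fi; rewrite card_imset ?card_ord //; exact: pair_inj. Qed.

Lemma matching_pairset (e : rel 'I_n) F : symmetric e -> injective F ->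
  (forall l, e (F (l, false)) (F (l, true))) -> matching e (pairset F).
Proof.
move=> se Fi eF; apply/andP; split.
  by apply/subsetP => E /imsetP [l _ ->]; rewrite edge2.
apply/trivIsetP => A B /imsetP [l _ ->] /imsetP [l' _ ->] ne.
have ll' : l != l' by apply: contra ne => /eqP ->.
rewrite -setI_eq0; apply/eqP/setP => x; rewrite !inE.
apply/negP => /andP [/orP h1 /orP h2].
by move: h2; case: h1 => /eqP ->; case => /eqP /Fi [] /eqP; rewrite (negbTE ll').
Qed.

Lemma match_num_ge (e : rel 'I_n) F : symmetric e -> injective F ->
  (forall l, e (F (l, false)) (F (l, true))) -> (k <= matching_number e)%N.
Proof.
move=> se Fi eF; rewrite -(card_pairset Fi).
by rewrite /matching_number; apply: leq_bigmax_cond; apply: matching_pairset.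
Qed.

Lemma mweight_pairset (R : realType) (X : 'cV[R]_n) F : injective F ->
  mweight X (pairset F) = \sum_l (X (F (l, false)) 0 + X (F (l, true)) 0) ^+ 2.
Proof.
move=> Fi; rewrite /mweight /pairset big_imset /=; last by move=> l l' _ _; apply: pair_inj.
apply: eq_bigr => l _.
rewrite big_setU1 ?big_set1 //= inE.
by apply/eqP => /Fi [].
Qed.

End Match.

Section FromHyp.
Variables (R : realType) (n k : nat) (e : rel 'I_n) (X : 'cV[R]_n) (Ms : {set {set 'I_n}}).
Variables (u v : 'I_k -> 'I_n).
Hypotheses (sg : simple_graph e) (hM : extremal_matching e X Ms)
  (hk : k = matching_number e) (hP : proper_ordering X Ms u v).

Definition FF (p : 'I_k * bool) : 'I_n := if p.2 then v p.1 else u p.1.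

Lemma Ms_pairset : Ms = pairset FF.
Proof. by case: hP. Qed.

Lemma FF_edge l : e (u l) (v l).
Proof.
case: hM => /andP [/andP [sub _] _] _.
have : [set u l; v l] \in Ms by rewrite Ms_pairset; apply/imsetP; exists l.
by move/(subsetP sub); rewrite edge2 //; case: sg.
Qed.

Lemma FF_inj : injective FF.
Proof.
case: hM => /andP [/andP [sub tri] /eqP cM] _.
have cardk : #|pairset FF| == #|'I_k|.
  by rewrite -Ms_pairset cM -hk card_ord.
have inj := imset_injP cardk.
have uv l : u l != v l.
  by apply/eqP => h; have := FF_edge l; rewrite h; case: sg => _ ->.
move=> [l b] [l' b'] /= h.
have [ll'|ll'] := eqVneq l l'.
  subst l'; congr pair.
  by move: h; rewrite /FF; case: b; case: b' => //= h; move: (uv l); rewrite h eqxx.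
exfalso.
have Hl : [set u l; v l] \in Ms by rewrite Ms_pairset; apply/imsetP; exists l.
have Hl' : [set u l'; v l'] \in Ms by rewrite Ms_pairset; apply/imsetP; exists l'.
have ne : [set u l; v l] != [set u l'; v l'].
  by apply: contra ll' => /eqP /inj; rewrite !inE => ->.
have := (trivIsetP tri) _ _ Hl Hl' ne.
rewrite -setI_eq0 => /eqP /setP /(_ (FF (l, b))).
rewrite !inE /FF /=.
by move: h; rewrite /FF /=; case: b; case: b' => /= ->; rewrite !eqxx ?orbT.
Qed.

End FromHyp.


Section K.
Variable T : finType.
Variables (e : rel T) (p r c d : T).
Hypotheses (se : symmetric e) (ie : irreflexive e) (epr : e p r) (ecd : e c d).
Hypotheses (pr : p != r) (pc : p != c) (pd : p != d) (rc : r != c) (rd : r != d) (cd : c != d).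

Let S := [set p; r; c; d].

Lemma inS x : x \in S -> [\/ x = p, x = r, x = c | x = d].
Proof. by rewrite !inE -!orbA => /or4P [] /eqP ->; [constructor 1|constructor 2|constructor 3|constructor 4]. Qed.

Lemma cardS : #|S| = 4%N.
Proof.
rewrite /S -!setUA !cardsU1 cards1 !inE.
by rewrite (negbTE pr) (negbTE pc) (negbTE pd) (negbTE rc) (negbTE rd) (negbTE cd).
Qed.

Lemma sub2S x y : x \in S -> y \in S -> [set x; y] \subset S.
Proof. by move=> hx hy; apply/subsetP => z /set2P [] ->. Qed.

Lemma pS : p \in S. Proof. by rewrite !inE eqxx. Qed.
Lemma rS : r \in S. Proof. by rewrite !inE eqxx !orbT. Qed.
Lemma cS : c \in S. Proof. by rewrite !inE eqxx !orbT. Qed.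
Lemma dS : d \in S. Proof. by rewrite !inE eqxx !orbT. Qed.

Let rp : r != p. Proof. by rewrite eq_sym. Qed.
Let cp : c != p. Proof. by rewrite eq_sym. Qed.
Let dp : d != p. Proof. by rewrite eq_sym. Qed.
Let cr : c != r. Proof. by rewrite eq_sym. Qed.
Let dr : d != r. Proof. by rewrite eq_sym. Qed.
Let dc : d != c. Proof. by rewrite eq_sym. Qed.

Lemma neq_pr_cd : [set p; r] != [set c; d].
Proof. by rewrite set2_eq (negbTE pc) (negbTE pd). Qed.

Lemma inIE (E : {set T}) (A : {set T}) : (E \in induced_edges e A) = (E \in edges e) && (E \subset A).
Proof. by rewrite /induced_edges in_set. Qed.

Lemma K1 : ~~ e p c -> ~~ e p d -> ~~ e r c -> ~~ e r d -> is_2K2 e S.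
Proof.
move=> /negbTE npc /negbTE npd /negbTE nrc /negbTE nrd.
have ncp : e c p = false by rewrite se.
have ndp : e d p = false by rewrite se.
have ncr : e c r = false by rewrite se.
have ndr : e d r = false by rewrite se.
have erp : e r p by rewrite se.
have edc : e d c by rewrite se.
have IE : induced_edges e S = [set [set p; r]; [set c; d]].
  apply/setP => E; rewrite inIE in_set2; apply/andP/idP.
    case=> /edgesP [x [y [exy ->]]] sub.
    have hx : x \in S by apply: (subsetP sub); rewrite set21.
    have hy : y \in S by apply: (subsetP sub); rewrite set22.
    move: exy; case: (inS hx) => ->; case: (inS hy) => ->;
      rewrite ?ie ?npc ?npd ?nrc ?nrd ?ncp ?ndp ?ncr ?ndr // => _;
      by rewrite ?eqxx ?(setUC [set r]) ?(setUC [set d]) ?eqxx ?orbT.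
  case/orP => /eqP ->.
    by rewrite edge2 // epr sub2S ?pS ?rS.
  by rewrite edge2 // ecd sub2S ?cS ?dS.
rewrite /is_2K2 cardS IE cards2 neq_pr_cd /=.
apply/trivIsetP => A B; rewrite !inE => /orP [] /eqP -> /orP [] /eqP -> //; rewrite ?eqxx // => _;
 rewrite -setI_eq0; apply/eqP/setP => z; rewrite !inE;
 by apply/negP => /andP [] /orP [] /eqP -> /orP [] /eqP h; move: h; apply/eqP; rewrite ?pc ?pd ?rc ?rd ?cp ?dp ?cr ?dr.
Qed.


Lemma K3 x z : x \in [set p; r] -> z \in [set c; d] -> e x z -> ~~ is_2K2 e S.
Proof.
move=> hx hz exz; rewrite /is_2K2; apply/negP => /and3P [_ /eqP c2 _].
have xS : x \in S by case/set2P: hx => ->; rewrite ?pS ?rS.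
have zS : z \in S by case/set2P: hz => ->; rewrite ?cS ?dS.
have n1 : [set x; z] != [set p; r].
  apply/negP => /eqP h; have : z \in [set p; r] by rewrite -h set22.
  by case/set2P: hz => -> /set2P [] /eqP; rewrite ?(negbTE cp) ?(negbTE cr) ?(negbTE dp) ?(negbTE dr).
have n2 : [set x; z] != [set c; d].
  apply/negP => /eqP h; have : x \in [set c; d] by rewrite -h set21.
  by case/set2P: hx => -> /set2P [] /eqP; rewrite ?(negbTE pc) ?(negbTE pd) ?(negbTE rc) ?(negbTE rd).
have sub : [set [set x; z]; [set p; r]; [set c; d]] \subset induced_edges e S.
  apply/subsetP => E hE; rewrite !inE -orbA in hE; case/or3P: hE => /eqP ->; rewrite inIE.
  - by rewrite edge2 // exz sub2S.
  - by rewrite edge2 // epr sub2S ?pS ?rS.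
  - by rewrite edge2 // ecd sub2S ?cS ?dS.
have := subset_leq_card sub; rewrite c2.
rewrite -setUA cardsU1 cards2 neq_pr_cd !inE (negbTE n1) (negbTE n2).
by [].
Qed.

Let D := [set A : {set T} | A \subset S & #|A| == 2%N].

Lemma cardD : #|D| = 6%N.
Proof. by rewrite /D cards_draws cardS. Qed.

Lemma IE_sub : induced_edges e S \subset D.
Proof.
apply/subsetP => E; rewrite inIE => /andP [/edgesP [x [y [exy ->]]] sub]; rewrite inE sub /=.
rewrite cards2; case: (eqVneq x y) => // h; by move: exy; rewrite h ie.
Qed.

Lemma K2 : e p c -> e p d -> e r c -> e r d -> is_K4 e S.
Proof.
move=> epc epd erc erd.
have ecp : e c p by rewrite se.
have edp : e d p by rewrite se.
have ecr : e c r by rewrite se.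
have edr : e d r by rewrite se.
have erp : e r p by rewrite se.
have edc : e d c by rewrite se.
have IEeq : induced_edges e S = D.
  apply/eqP; rewrite eqEcard IE_sub cardD /=.
  suff : D \subset induced_edges e S by move/subset_leq_card; rewrite cardD.
  apply/subsetP => E; rewrite inE => /andP [sub /cards2P [x [y [xy Exy]]]].
  rewrite inIE sub andbT Exy edge2 //.
  have hx : x \in S by apply: (subsetP sub); rewrite Exy set21.
  have hy : y \in S by apply: (subsetP sub); rewrite Exy set22.
  move: xy; case: (inS hx) => ->; case: (inS hy) => ->; rewrite ?eqxx //.
by rewrite /is_K4 cardS IEeq cardD.
Qed.

Lemma K4 x y : is_K4 e S -> x \in S -> y \in S -> x != y -> e x y.
Proof.
move=> /andP [_ /eqP c6] hx hy xy.
have : induced_edges e S == D by rewrite eqEcard IE_sub cardD c6.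
move/eqP => h.
have : [set x; y] \in D by rewrite inE sub2S // cards2 xy.
by rewrite -h inIE edge2 // => /andP [].
Qed.

End K.


Lemma chain (R : realType) n k (X : 'cV[R]_n) Ms (u v : 'I_k -> 'I_n) :
  proper_ordering X Ms u v -> forall i j : 'I_k, (i <= j)%N ->
  X (v j) 0 <= X (v i) 0 /\ (X (v i) 0 = X (v j) 0 -> X (u j) 0 <= X (u i) 0).
Proof.
case=> _ _ hc.
suff H : forall d (i j : 'I_k), val j = (val i + d)%N ->
  X (v j) 0 <= X (v i) 0 /\ (X (v i) 0 = X (v j) 0 -> X (u j) 0 <= X (u i) 0).
  by move=> i j ij; apply: (H (j - i)%N); rewrite subnKC.
elim=> [|d IH] i j hij.
  by have -> : j = i by apply: val_inj; rewrite hij addn0.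
have hd : (val i + d < k)%N by rewrite (leq_trans _ (ltn_ord j)) // hij addnS.
pose j' : 'I_k := Ordinal hd.
have [h1 h2] := IH i j' erefl.
have [h3 h4] := hc j' j (etrans hij (addnS _ _)).
split; first exact: le_trans h3 h1.
move=> e1.
have e2 : X (v j') 0 = X (v j) 0.
  by apply/eqP; rewrite eq_le h3 -e1 h1.
apply: le_trans (h4 e2) (h2 _).
by rewrite e1 e2.
Qed.

Lemma rot_keep n (e : rel 'I_n) y t s a b : e a b -> ~~ ((a == y) && (b == t)) ->
  ~~ ((a == t) && (b == y)) -> rot e y t s a b.
Proof. by move=> h1 h2 h3; rewrite /rot h1 h2 h3 !orbT. Qed.

Lemma rot_add1 n (e : rel 'I_n) y t s : rot e y t s y s.
Proof. by rewrite /rot !eqxx. Qed.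

Lemma rot_add2 n (e : rel 'I_n) y t s : rot e y t s s y.
Proof. by rewrite /rot !eqxx orbT. Qed.

Section Princ.
Variables (R : realType) (n : nat) (e : rel 'I_n) (qs : R) (X : 'cV[R]_n).
Hypotheses (sg : simple_graph e) (hX : principal_eigvec e qs X).

Lemma X_ge0 i : 0 <= X i 0.
Proof. by case: hX. Qed.

Lemma dotXX : dot X X = 1.
Proof. by case: hX => _ <- _; apply: eq_bigr => i _; rewrite expr2. Qed.

Lemma QX i : (sQ R e *m X) i 0 = qs * X i 0.
Proof. by case: hX => _ _ ->; rewrite mxE. Qed.

Lemma quadX : dot X (sQ R e *m X) = qs.
Proof. by case: hX => _ _ ->; rewrite dotZr dotXX mulr1. Qed.

Lemma zero_nb w z : e w z -> X w 0 = 0 -> X z 0 = 0.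
Proof.
move=> ewz xw.
have := QX w; rewrite sQ_mul xw mulr0 => hs.
have P : forall j, true -> 0 <= (e w j)%:R * (0 + X j 0).
  by move=> j _; rewrite mulr_ge0 ?ler0n // add0r X_ge0.
by have := psumr_eq0P P hs (i:=z) isT; rewrite ewz mul1r add0r.
Qed.

Lemma pos_vertex : exists s0, 0 < X s0 0.
Proof.
case: (pickP (fun i => 0 < X i 0)) => [s0 hs0|H]; first by exists s0.
have : dot X X = 0.
  rewrite /dot big1 // => i _.
  have : X i 0 = 0 by apply/eqP; rewrite eq_le X_ge0 andbT leNgt H.
  by move=> ->; rewrite mulr0.
by rewrite dotXX => /eqP; rewrite oner_eq0.
Qed.

End Princ.


Lemma num_aux (R : realType) (qs s' xy xt xs : R) : 0 <= xy -> 0 <= xt -> xt <= xs ->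
  qs - (xy + xt) ^+ 2 + (xy + xs) ^+ 2 <= s' -> s' <= qs ->
  s' = qs /\ (xy + xt) ^+ 2 = (xy + xs) ^+ 2.
Proof. move=> *; split; nra. Qed.

Lemma rot_contra (R : realType) (m beta n : nat) (e : rel 'I_n) (qs : R) (X : 'cV[R]_n)
   (y t s : 'I_n) :
  simple_graph e -> #|edges e| = m ->
  (forall (n' : nat) (e' : rel 'I_n') (q' : R), simple_graph e' -> #|edges e'| = m ->
      (beta <= matching_number e')%N -> is_q e' q' -> q' <= qs) ->
  principal_eigvec e qs X ->
  e y t -> ~~ e y s -> y != s -> X t 0 <= X s 0 ->
  (beta <= matching_number (rot e y t s))%N ->
  [/\ X y 0 = 0, X t 0 = 0 & X s 0 = 0].
Proof.
move=> sg hm Hext hX eyt neys ys hts hb.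
have [se ie] := sg.
have n0 : (0 < n)%N by apply: leq_ltn_trans (leq0n _) (ltn_ord y).
have sg' : simple_graph (rot e y t s) by apply: rot_simple.
have [s' [isq ray eqc]] := graph_spec R sg' n0.
have hs' : s' <= qs.
  by apply: (Hext _ _ _ sg') => //; rewrite edges_rot.
have hq := ray X; rewrite quad_rot // (quadX hX) (dotXX hX) mulr1 in hq.
have [e1 e2] := num_aux (X_ge0 hX y) (X_ge0 hX t) hts hq hs'.
have hQ : sQ R (rot e y t s) *m X = s' *: X.
  apply: eqc; rewrite quad_rot // (quadX hX) (dotXX hX) mulr1 e1 e2; ring.
have := row_rot (R:=R) se ie eyt neys ys X.
rewrite hQ (QX hX) mxE e1 => h.
have h0 : X t 0 + X y 0 = 0.
  by move/eqP: h; rewrite -subr_eq0 opprB addrC subrK => /eqP; rewrite ?opprK; lra.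
have xt0 : X t 0 = 0 by have := X_ge0 hX t; have := X_ge0 hX y; lra.
have xy0 : X y 0 = 0 by have := X_ge0 hX t; have := X_ge0 hX y; lra.
split => //.
move: e2; rewrite xt0 xy0 !add0r expr0n /= => /esym /eqP.
by rewrite sqrf_eq0 => /eqP.
Qed.


Section TP.
Variables (k : nat) (i j : 'I_k).
Hypothesis ij : i != j.

Lemma tpi b1 b2 b : b != b1 -> tperm (T := ('I_k * bool)%type) (i, b1) (j, b2) (i, b) = (i, b).
Proof.
move=> h; have h' : b1 != b by rewrite eq_sym.
have ji : j != i by rewrite eq_sym.
by rewrite tpermD // xpair_eqE ?eqxx /= ?(negbTE h) ?(negbTE h') ?(negbTE ij) ?(negbTE ji) ?andbF.
Qed.

Lemma tpj b1 b2 b : b != b2 -> tperm (T := ('I_k * bool)%type) (i, b1) (j, b2) (j, b) = (j, b).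
Proof.
move=> h; have h' : b2 != b by rewrite eq_sym.
have ji : j != i by rewrite eq_sym.
by rewrite tpermD // xpair_eqE ?eqxx /= ?(negbTE h) ?(negbTE h') ?(negbTE ij) ?(negbTE ji) ?andbF.
Qed.

Lemma tpl b1 b2 l b : l != i -> l != j -> tperm (T := ('I_k * bool)%type) (i, b1) (j, b2) (l, b) = (l, b).
Proof.
move=> li lj; have il : i != l by rewrite eq_sym.
have jl : j != l by rewrite eq_sym.
by rewrite tpermD // xpair_eqE /= ?(negbTE il) ?(negbTE jl).
Qed.

End TP.

Lemma cross_ne n k (F : 'I_k * bool -> 'I_n) (i j l : 'I_k) b1 b2 c1 c2 :
  injective F -> i != j -> ~~ ((F (l, c1) == F (j, b1)) && (F (l, c2) == F (i, b2))).
Proof.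
move=> Fi ij; apply/negP => /andP [/eqP /Fi [] -> _ /eqP /Fi [] h _].
by rewrite h eqxx in ij.
Qed.

Lemma sum_diff2 (R : realType) k (g g' : 'I_k -> R) (i j : 'I_k) : i != j ->
  (forall l, l != i -> l != j -> g' l = g l) ->
  \sum_l g' l - \sum_l g l = g' i + g' j - g i - g j.
Proof.
move=> ij h.
have ji : j != i by rewrite eq_sym.
rewrite -sumrB (bigD1 i) //= (bigD1 j) /= ?ji // big1 ?addr0; first by ring.
by move=> l /andP [li lj]; rewrite h ?subrr.
Qed.


Theorem lemma2p3 (R : realType) (m beta n : nat) (e : rel 'I_n) (qs : R)
    (X : 'cV[R]_n) (Ms : {set {set 'I_n}}) (k : nat) (u v : 'I_k -> 'I_n) :
  (1 <= beta <= m)%N ->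
  simple_graph e -> #|edges e| = m -> (beta <= matching_number e)%N ->
  is_q e qs ->
  (forall (n' : nat) (e' : rel 'I_n') (q' : R),
      simple_graph e' -> #|edges e'| = m -> (beta <= matching_number e')%N ->
      is_q e' q' -> q' <= qs) ->
  principal_eigvec e qs X ->
  extremal_matching e X Ms ->
  k = matching_number e ->
  proper_ordering X Ms u v ->
  (2 <= matching_number e)%N ->
  forall i j : 'I_k, (i < j)%N ->
    (X (v j) 0 <= X (u i) 0 <->
     is_2K2 e [set u i; v i; u j; v j] \/ is_K4 e [set u i; v i; u j; v j]).
Proof.
move=> hbm sg hm hbeta isq Hext hX hM hk hP hk2 i j ij.
have [se ie] := sg.
pose F := FF u v.
have Fi : injective F by apply: FF_inj sg hM hk hP.
have Fe l : e (u l) (v l) := FF_edge sg hM hP l.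
have ij' : i != j by rewrite neq_ltn ij.
have ji' : j != i by rewrite eq_sym.
have pr : u i != v i by apply/eqP => /(Fi (i, false) (i, true)).
have cd : u j != v j by apply/eqP => /(Fi (j, false) (j, true)).
have pc : u i != u j := Fne false false Fi ij'.
have pd : u i != v j := Fne false true Fi ij'.
have rc : v i != u j := Fne true false Fi ij'.
have rd : v i != v j := Fne true true Fi ij'.
have [_ huv _] := hP.
have hab := huv i; have hcd := huv j.
have [hdb hbd] := chain hP (ltnW ij).
have X0 := X_ge0 hX.
have sF : forall l b, F (l, b) = if b then v l else u l by [].
have Fi1 (b : bool) : injective (fun z => F (tperm (T := ('I_k * bool)%type) (i, true) (j, b) z)).
  by move=> z1 z2 /Fi /perm_inj.
have Foth (b bb : bool) l : l != i -> l != j ->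
    F (tperm (T := ('I_k * bool)%type) (i, true) (j, b) (l, bb)) = F (l, bb).
  by move=> li lj; rewrite tpl.
split.
- move=> hda.
  case: (boolP [&& ~~ e (u i) (u j), ~~ e (u i) (v j), ~~ e (v i) (u j) & ~~ e (v i) (v j)])
    => [/and4P [h1 h2 h3 h4]|H0].
    by left; apply: K1.
  case: (boolP [&& e (u i) (u j), e (u i) (v j), e (v i) (u j) & e (v i) (v j)])
    => [/and4P [h1 h2 h3 h4]|H1].
    by right; apply: K2.
  exfalso.
  have [dz|dpos] : X (v j) 0 = 0 \/ 0 < X (v j) 0.
    by case: (X0 (v j)); rewrite le_eqVlt => /orP [/eqP <-|->]; [left|right].
  + have cz : X (u j) 0 = 0 by have := X0 (u j); lra.
    have zero_case : forall (w z : 'I_n) b1 b2, w = F (j, b1) -> z = F (i, b2) -> e z w -> False.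
      move=> w z b1 b2 hw hz ezw.
      have ewz : e w z by rewrite se.
      have xw : X w 0 = 0 by rewrite hw sF; case: (b1).
      have [s0 hs0] := pos_vertex hX.
      have xz := zero_nb hX ewz xw.
      have nws : ~~ e w s0.
        by apply/negP => h; have := zero_nb hX h xw => h0; rewrite h0 ltxx in hs0.
      have ws : w != s0 by apply/eqP => h; rewrite -h xw ltxx in hs0.
      have sg' : simple_graph (rot e w z s0) by apply: rot_simple.
      have hb : (beta <= matching_number (rot e w z s0))%N.
        apply: leq_trans hbeta _; rewrite -hk.
        apply: (match_num_ge (F := F)) => //; first by case: sg'.
        move=> l; apply: rot_keep; first exact: Fe.
          by rewrite hw hz; exact: (cross_ne l b1 b2 false true Fi ij').
        by rewrite hw hz; exact: (cross_ne l b2 b1 false true Fi ji').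
      have hzs : X z 0 <= X s0 0 by rewrite xz ltW.
      have [_ _ xs0] := rot_contra sg hm Hext hX ewz nws ws hzs hb.
      by rewrite xs0 ltxx in hs0.
    move: H0 H1.
    case E1: (e (u i) (u j)); first by move=> *; exact: (zero_case (u j) (u i) false false).
    case E2: (e (u i) (v j)); first by move=> *; exact: (zero_case (v j) (u i) true false).
    case E3: (e (v i) (u j)); first by move=> *; exact: (zero_case (u j) (v i) false true).
    case E4: (e (v i) (v j)); first by move=> *; exact: (zero_case (v j) (v i) true true).
    by [].
  + have r1_case : forall w b1, w = F (j, b1) -> e (u i) w -> ~~ e (v i) w -> False.
      move=> w b1 hw epw nrw.
      have ewp : e w (u i) by rewrite se.
      have nwr : ~~ e w (v i) by rewrite se.
      have wr : w != v i by rewrite hw; exact: (Fne b1 true Fi ji').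
      have sg' : simple_graph (rot e w (u i) (v i)) by apply: rot_simple.
      have hb : (beta <= matching_number (rot e w (u i) (v i)))%N.
        apply: leq_trans hbeta _; rewrite -hk.
        apply: (match_num_ge (F := F)) => //; first by case: sg'.
        move=> l; apply: rot_keep; first exact: Fe.
          by rewrite hw; exact: (cross_ne l b1 false false true Fi ij').
        by rewrite hw; exact: (cross_ne l false b1 false true Fi ji').
      have [_ xp _] := rot_contra sg hm Hext hX ewp nwr wr hab hb.
      by move: hda; rewrite xp; lra.
    have r2A : e (v i) (u j) -> ~~ e (u i) (v j) -> False.
      move=> erc npd.
      have eyt : e (v j) (u j) by rewrite se.
      have neys : ~~ e (v j) (u i) by rewrite se.
      have ys : v j != u i by exact: (Fne true false Fi ji').
      have hts : X (u j) 0 <= X (u i) 0 by lra.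
      have sg' : simple_graph (rot e (v j) (u j) (u i)) by apply: rot_simple.
      have hb : (beta <= matching_number (rot e (v j) (u j) (u i)))%N.
        apply: leq_trans hbeta _; rewrite -hk.
        apply: (match_num_ge (F := fun z => F (tperm (T := ('I_k * bool)%type) (i, true) (j, true) z)))
          => //; first by case: sg'.
        move=> l.
        have [->|li] := eqVneq l i.
          by rewrite tpi // tpermL; apply: rot_add2.
        have [->|lj] := eqVneq l j.
          rewrite tpj // tpermR /=; apply: rot_keep; first by rewrite se.
            by rewrite (negbTE cd).
          by rewrite eqxx (negbTE rd).
        rewrite !Foth //=; apply: rot_keep; first exact: Fe.
          by rewrite (negbTE (Fne false true Fi lj)).
        by rewrite (negbTE (Fne false false Fi lj)).
      have [xd _ _] := rot_contra sg hm Hext hX eyt neys ys hts hb.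
      by move: dpos; rewrite xd ltxx.
    have r2B : ~~ e (u i) (u j) -> e (v i) (v j) -> False.
      move=> npc erd.
      have eyt : e (u j) (v j) by [].
      have neys : ~~ e (u j) (u i) by rewrite se.
      have ys : u j != u i by exact: (Fne false false Fi ji').
      have hts : X (v j) 0 <= X (u i) 0 by lra.
      have sg' : simple_graph (rot e (u j) (v j) (u i)) by apply: rot_simple.
      have hb : (beta <= matching_number (rot e (u j) (v j) (u i)))%N.
        apply: leq_trans hbeta _; rewrite -hk.
        apply: (match_num_ge (F := fun z => F (tperm (T := ('I_k * bool)%type) (i, true) (j, false) z)))
          => //; first by case: sg'.
        move=> l.
        have [->|li] := eqVneq l i.
          by rewrite tpi // tpermL; apply: rot_add2.
        have [->|lj] := eqVneq l j.
          rewrite tpermR tpj //=; apply: rot_keep => //.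
            by rewrite (negbTE rc).
          by rewrite (negbTE rd).
        rewrite !Foth //=; apply: rot_keep; first exact: Fe.
          by rewrite (negbTE (Fne false false Fi lj)).
        by rewrite (negbTE (Fne false true Fi lj)).
      have [_ xd _] := rot_contra sg hm Hext hX eyt neys ys hts hb.
      by move: dpos; rewrite xd ltxx.
    move: H0 H1.
    case E1: (e (u i) (u j)); case E2: (e (u i) (v j)); case E3: (e (v i) (u j));
      case E4: (e (v i) (v j)) => //= _ _;
      first [ exact: (r1_case (u j) false erefl E1 (negbT E3))
            | exact: (r1_case (v j) true erefl E2 (negbT E4))
            | exact: (r2A E3 (negbT E2))
            | exact: (r2B (negbT E1) E4) ].
- move=> H; rewrite leNgt; apply/negP => hlt.
  have hbc : X (u j) 0 < X (v i) 0.
    rewrite ltNge; apply/negP => hbc.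
    have bd : X (v i) 0 = X (v j) 0 by apply/eqP; rewrite eq_le hdb andbT (le_trans hbc hcd).
    have := hbd bd; lra.
  have inS1 : u i \in [set u i; v i; u j; v j] by rewrite !inE eqxx.
  have inS2 : v i \in [set u i; v i; u j; v j] by rewrite !inE eqxx !orbT.
  have inS3 : u j \in [set u i; v i; u j; v j] by rewrite !inE eqxx !orbT.
  have inS4 : v j \in [set u i; v i; u j; v j] by rewrite !inE eqxx !orbT.
  pose F2 := fun z => F (tperm (T := ('I_k * bool)%type) (i, true) (j, false) z).
  have F2i : F2 (i, false) = u i by rewrite /F2 tpi.
  have F2i' : F2 (i, true) = u j by rewrite /F2 tpermL.
  have F2j : F2 (j, false) = v i by rewrite /F2 tpermR.
  have F2j' : F2 (j, true) = v j by rewrite /F2 tpj.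
  have F2o l b : l != i -> l != j -> F2 (l, b) = F (l, b) by move=> li lj; rewrite /F2 tpl.
  case: H => [H2|H4].
  + have npc : ~~ e (u i) (u j).
      apply/negP => h; move: H2; apply/negP.
      exact: (@K3 _ e (u i) (v i) (u j) (v j) se (Fe i) (Fe j) pc pd rc rd (u i) (u j) (set21 _ _) (set21 _ _) h).
    have nrd : ~~ e (v i) (v j).
      apply/negP => h; move: H2; apply/negP.
      exact: (@K3 _ e (u i) (v i) (u j) (v j) se (Fe i) (Fe j) pc pd rc rd (v i) (v j) (set22 _ _) (set22 _ _) h).
    have erp : e (v i) (u i) by rewrite se.
    have sg1 : simple_graph (rot e (v i) (u i) (v j)) by apply: rot_simple.
    have [se1 ie1] := sg1.
    have cr : u j != v i by rewrite eq_sym.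
    have cp : u j != u i by rewrite eq_sym.
    have e1cd : rot e (v i) (u i) (v j) (u j) (v j).
      by apply: rot_keep; rewrite ?Fe ?(negbTE cr) ?(negbTE cp).
    have ne1cp : ~~ rot e (v i) (u i) (v j) (u j) (u i).
      by rewrite /rot (negbTE cr) (negbTE cd) se (negbTE npc).
    pose e2 := rot (rot e (v i) (u i) (v j)) (u j) (v j) (u i).
    have sg2 : simple_graph e2 by apply: rot_simple.
    have n0 : (0 < n)%N by apply: leq_ltn_trans (leq0n _) (ltn_ord (u i)).
    have [s2 [isq2 ray2 _]] := graph_spec R sg2 n0.
    have hm2 : #|edges e2| = m by rewrite /e2 edges_rot // edges_rot.
    have hb2 : (beta <= matching_number e2)%N.
      apply: leq_trans hbeta _; rewrite -hk.
      apply: (match_num_ge (F := F2)) => //; first by case: sg2.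
        by move=> z1 z2 /Fi /perm_inj.
      move=> l.
      have [->|li] := eqVneq l i.
        by rewrite F2i F2i'; apply: rot_add2.
      have [->|lj] := eqVneq l j.
        rewrite F2j F2j'; apply: rot_keep; first exact: rot_add1.
          by rewrite (negbTE rc).
        by rewrite (negbTE rd).
      rewrite !F2o //=; apply: rot_keep; first apply: rot_keep; first exact: Fe.
      - by rewrite (negbTE (Fne false true Fi li)).
      - by rewrite (negbTE (Fne false false Fi li)).
      - by rewrite (negbTE (Fne false false Fi lj)).
      - by rewrite (negbTE (Fne false true Fi lj)).
    have hs2 : s2 <= qs by apply: (Hext _ _ _ sg2).
    have := ray2 X; rewrite /e2 quad_rot // quad_rot // (quadX hX) (dotXX hX) mulr1 => hq.
    have hle := le_trans hq hs2.
    move: hle hlt hbc; clear -X0.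
    have := X0 (u i); have := X0 (v i); have := X0 (u j); have := X0 (v j).
    move: (X (u i) 0) (X (v i) 0) (X (u j) 0) (X (v j) 0) => a b c d *.
    nra.
  + have epc : e (u i) (u j) by apply: (K4 (p := u i) (r := v i) (c := u j) (d := v j)).
    have erd : e (v i) (v j) by apply: (K4 (p := u i) (r := v i) (c := u j) (d := v j)).
    have F2inj : injective F2 by move=> z1 z2 /Fi /perm_inj.
    have F2e l : e (F2 (l, false)) (F2 (l, true)).
      have [->|li] := eqVneq l i; first by rewrite F2i F2i'.
      have [->|lj] := eqVneq l j; first by rewrite F2j F2j'.
      by rewrite !F2o //; apply: Fe.
    have hmax : max_matching e (pairset F2).
      apply/andP; split; first exact: matching_pairset.
      by rewrite card_pairset // -hk.
    have := (proj2 hM) _ hmax.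
    rewrite (Ms_pairset hP) !mweight_pairset // -subr_ge0.
    rewrite (sum_diff2 (i := i) (j := j)) //; last first.
      by move=> l li lj /=; rewrite !F2o.
    rewrite F2i F2i' F2j F2j' /F /FF /=.
    move: hlt hbc; clear -X0.
    have := X0 (u i); have := X0 (v i); have := X0 (u j); have := X0 (v j).
    move: (X (u i) 0) (X (v i) 0) (X (u j) 0) (X (v j) 0) => a b c d *.
    nra.
Qed.
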